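(* Let $D>0$, $c_4>0$, $k>0$ and consider the system, for $x\in[0,D]$, $t\ge0$, $$\tilde v_t(x,t)-c_4\tilde v_x(x,t)=-k\tilde v(x,t),\qquad \tilde v_t(D,t)=-k\tilde v(D,t).$$ This system is $\mathscr L_p$, $p\in[1,\infty]$, convectively stable in the sense that for any $0\le x_2<x_1\le D$ such that $\tilde v(x_1,\cdot)\in\mathscr L_p$ and $\tilde v_x(x_1,\cdot)\in\mathscr L_p$, the following hold: $$\|\tilde v(x_2,\cdot)\|_{\mathscr L_p}<\|\tilde v(x_1,\cdot)\|_{\mathscr L_p},\qquad \|\tilde v_x(x_2,\cdot)\|_{\mathscr L_p}<\|\tilde v_x(x_1,\cdot)\|_{\mathscr L_p}.$$
   Context: For a signal $f$ on $[0,\infty)$, $\|f\|_{\mathscr L_p}=\left(\int_0^\infty|f(t)|^pdt\right)^{1/p}$ for $p<\infty$ and $\|f\|_{\mathscr L_\infty}=\sup_{t\ge0}|f(t)|$. The statement is understood in an input-output sense: $t\mapsto\tilde v(x_1,t)$ is regarded as the input signal and $\tilde v(x_2,\cdot)$ as the corresponding output of the transport equation with zero initial conditions (effect of initial data disregarded, i.e. $\tilde v(x_1,\theta)=0$ for $\theta<0$). Here $\tilde v$ is the deviation of traffic speed from equilibrium, and $x$ is the position along a freeway stretch of length $D$. *)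

(* Defs.v *)
From HB Require Import structures.
From mathcomp Require Import all_boot all_order all_algebra.
From mathcomp Require Import all_classical all_reals all_analysis.
Set Implicit Arguments. Unset Strict Implicit. Unset Printing Implicit Defensive.
Import Order.TTheory GRing.Theory Num.Theory.
Import numFieldNormedType.Exports.
Local Open Scope classical_set_scope.
Local Open Scope ring_scope.

Definition Lpnorm {R : realType} (p : \bar R) (f : R -> R) : \bar R :=
  match p with
  | p'%:E => ((\int[lebesgue_measure]_(t in `[0%R : R, +oo[%classic)
                 ((`|f t| `^ p')%:E)) `^ p'^-1)%E
  | +oo%E => ereal_sup [set (`|f t|)%:E | t in `[0%R, +oo[%classic]
  | -oo%E => 0%E
  end.

Definition in_Lp {R : realType} (p : \bar R) (f : R -> R) : Prop :=
  measurable_fun `[0%R : R, +oo[%classic f /\ (Lpnorm p f < +oo)%E.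

Definition dt {R : realType} (v : R -> R -> R) (x t : R) : R := derive1 (v x) t.
Definition dx {R : realType} (v : R -> R -> R) (x t : R) : R :=
  derive1 (fun y => v y t) x.

(* Main.v *)
Require Import Defs.
From HB Require Import structures.
From mathcomp Require Import all_boot all_order all_algebra.
From mathcomp Require Import all_classical all_reals all_analysis.
From mathcomp Require Import measurable_realfun.
From mathcomp Require Import ring lra.
Import Order.TTheory GRing.Theory Num.Theory.
Import numFieldNormedType.Exports.
Local Open Scope classical_set_scope.
Local Open Scope ring_scope.

Set Implicit Arguments. Unset Strict Implicit. Unset Printing Implicit Defensive.

Section S.
Context {R : realType}.


Lemma mphi (S : R) : measurable_fun [set: R] (fun t : R => t - S).
Proof. by apply: measurable_funB => //; exact: measurable_cst. Qed.
Definition shiftS (S : R) := fun t : R => (t - S)%R.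
Definition pf (S : R) : set (measurableTypeR R) -> \bar R := fun A => @lebesgue_measure R (shiftS S @^-1` A).
Let pf0 S : pf S set0 = 0%E.
Proof. by rewrite /pf preimage_set0 measure0. Qed.
Let pf_ge0 S A : (0 <= pf S A)%E.
Proof. by rewrite /pf; apply: measure_ge0. Qed.
Let pf_sa S : semi_sigma_additive (pf S).
Proof.
move=> F mF tF mUF; rewrite /pf preimage_bigcup.
apply: measure_semi_sigma_additive.
- by move=> n; rewrite -[X in measurable X]setTI; exact: (mphi S measurableT (mF n)).
- apply/trivIsetP => /= i j _ _ ij; rewrite -preimage_setI.
  by move/trivIsetP : tF => /(_ _ _ _ _ ij) ->//; rewrite preimage_set0.
- by rewrite -preimage_bigcup -[X in measurable X]setTI; exact: (mphi S measurableT mUF).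
Qed.
HB.instance Definition _ S := isMeasure.Build _ _ _ (pf S) (pf0 S) (@pf_ge0 S) (@pf_sa S).

Lemma shift_leb (S : R) (A : set R) : measurable A ->
  lebesgue_measure (shiftS S @^-1` A) = lebesgue_measure A.
Proof.
move=> mA.
have H : forall X, ocitv X -> lebesgue_measure X = pf S X.
  move=> _ [[a b] _ <-].
  rewrite /pf /=.
  have -> : shiftS S @^-1` `]a, b] = `]a + S, b + S]%classic.
    apply/seteqP; split => x; rewrite /shiftS /= !in_itv /=.
      by rewrite ltrBrDr lerBlDr.
    by rewrite ltrBrDr lerBlDr.
  rewrite !lebesgue_measure_itv /= !lte_fin ltrD2r.
  case: ifP => // _; rewrite -!EFinD; congr EFin; ring.
by rewrite (lebesgue_measure_unique H mA).
Qed.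

Lemma Lp_shift_le (w : R -> R) (a S p : R) : 0 <= a -> 1 <= p ->
  (forall th, th < 0 -> w th = 0) ->
  measurable_fun `[0%R : R, +oo[%classic w ->
  (\int[lebesgue_measure]_(t in `[0%R : R, +oo[%classic) ((`|a * w (t - S)| `^ p)%:E)
   <= (a `^ p)%:E * \int[lebesgue_measure]_(t in `[0%R : R, +oo[%classic) ((`|w t| `^ p)%:E))%E.
Proof.
move=> a0 p1 w0 mw.
have p0 : p != 0 by apply: lt0r_neq0; apply: lt_le_trans p1.
set G0 := fun y => (`|w y| `^ p)%:E.
have G0E : G0 = G0 \_ `[0%R : R, +oo[%classic.
  apply/funext => y; rewrite /patch; case: ifPn => // /negP.
  rewrite inE /= in_itv /= andbT => /negP; rewrite -ltNge => /w0 y0.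
  by rewrite /G0 y0 normr0 powR0.
have mG0 : measurable_fun setT G0.
  rewrite G0E; apply/(measurable_restrictT _ _).1 => //.
  apply/measurable_EFinP.
  apply: (measurableT_comp (measurable_powR _)).
  exact: measurableT_comp.
have msh : measurable_fun setT (shiftS S) := mphi S.
have mG0sh : measurable_fun setT (G0 \o shiftS S).
  exact: measurableT_comp.
have G0ge0 y : (0 <= G0 y)%E by rewrite /G0 lee_fin powR_ge0.
under eq_integral => t _ do rewrite normrM powRM // (ger0_norm a0) EFinM.
rewrite ge0_integralZl_EFin //; last 2 first.
- by apply: measurable_funS mG0sh.
- exact: powR_ge0.
apply: lee_wpmul2l; first by rewrite lee_fin powR_ge0.
have H1 : (\int[lebesgue_measure]_(t in `[0%R : R, +oo[%classic) (G0 \o shiftS S) t <= \int[lebesgue_measure]_(t in setT) (G0 \o shiftS S) t)%E.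
  by apply: ge0_subset_integral => // x _; apply: G0ge0.
apply: le_trans H1 _.
have E := @ge0_integral_pushforward _ _ (measurableTypeR R) (measurableTypeR R) R (shiftS S) msh lebesgue_measure setT G0 measurableT mG0 (fun y _ => G0ge0 y).
rewrite preimage_setT in E.
rewrite -E.

rewrite (eq_measure_integral lebesgue_measure); last first.
  by move=> A mA _; rewrite /pushforward; exact: (shift_leb S mA).
by rewrite [X in (_ <= X)%E]integral_mkcond -G0E.
Qed.

Lemma final_lt (a : R) (N : \bar R) : 0 < a < 1 -> (0 < N)%E -> (N < +oo)%E -> (a%:E * N < N)%E.
Proof.
move=> /andP[a0 a1]; case: N => [n| |] //=; rewrite !lte_fin => n0 _.
by rewrite gtr_pMl.
Qed.

Lemma Lp_shift_lt (w u : R -> R) (a S : R) (p : \bar R) : 0 < a < 1 -> (1 <= p)%E ->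
  (forall th, th < 0 -> w th = 0) -> (forall t, u t = a * w (t - S)) ->
  in_Lp p w -> (0 < Lpnorm p w)%E -> (Lpnorm p u < Lpnorm p w)%E.
Proof.
move=> /[dup] aa /andP[a0 a1] p1 w0 uE [mw Nfin] N0.
apply: le_lt_trans (final_lt aa N0 Nfin).
move: p p1 Nfin N0 => [p| |] //=; rewrite ?lee_fin => p1 Nfin N0.
- have p0 : 0 < p by apply: lt_le_trans p1.
  have -> : (fun t => (`|u t| `^ p)%:E) = (fun t => (`|a * w (t - S)| `^ p)%:E).
    by apply/funext => t; rewrite uE.
  have H := Lp_shift_le S (ltW a0) p1 w0 mw.
  set Iu := (\int[_]_(t in _) _)%E in H *.
  set Iw := (\int[_]_(t in _) _)%E in H *.
  have Iu0 : (0 <= Iu)%E by apply: integral_ge0 => t _; rewrite lee_fin powR_ge0.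
  have Iw0 : (0 <= Iw)%E by apply: integral_ge0 => t _; rewrite lee_fin powR_ge0.
  apply: (@le_trans _ _ (((a `^ p)%:E * Iw) `^ p^-1)%E).
    apply: gt0_ler_poweR => //.
    - by rewrite invr_ge0 ltW.
    - by rewrite in_itv /= Iu0 leey.
    - by rewrite in_itv /= leey andbT mule_ge0 // lee_fin powR_ge0.
  rewrite poweRM ?lee_fin ?powR_ge0 // poweR_EFin -powRrM mulfV ?gt_eqF //.
  by rewrite powRr1 ?(ltW a0).
- apply: ub_ereal_sup => _ [t t0 <-].
  rewrite uE normrM (gtr0_norm a0) EFinM.
  have [tS|tS] := leP 0 (t - S).
    apply: lee_wpmul2l; first by rewrite lee_fin ltW.
    apply: ereal_sup_ubound; exists (t - S) => //.
    by rewrite /= in_itv /= tS.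
  rewrite w0 // normr0 mule0 mule_ge0 // ?lee_fin ?ltW //.
Qed.
End S.

Section C.
Context {R : realType}.
Variable v : R -> R -> R.
Let f := fun z : R * R => v z.1 z.2.
Lemma did (x : R) : differentiable (fun y : R => y) x.
Proof. by apply/derivable1_diffP. Qed.

Lemma L1 (g1 g2 : R -> R) s :
  differentiable g1 s -> differentiable g2 s ->
  differentiable f (g1 s, g2 s) ->
  differentiable (fun s => v (g1 s) (g2 s)) s /\
  'D_1 (fun s => v (g1 s) (g2 s)) s = 'd f (g1 s, g2 s) ('D_1 g1 s, 'D_1 g2 s).
Proof.
move=> d1 d2 df.
have dh : differentiable (fun s => (g1 s, g2 s)) s by exact: differentiable_pair.
have dfh : differentiable (f \o (fun s => (g1 s, g2 s))) s by exact: differentiable_comp.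
split; first exact: dfh.
have -> : (fun s => v (g1 s) (g2 s)) = f \o (fun s => (g1 s, g2 s)) by [].
rewrite deriveE // diff_comp //= diff_pair //= -!deriveE //.
Qed.

Lemma dxE a b : differentiable f (a, b) -> dx v a b = 'd f (a, b) (1, 0).
Proof.
move=> df.
have [_ H] := @L1 (fun y => y) (fun=> b) a (did _) (differentiable_cst _ _) df.
rewrite /dx derive1E H derive_id.
by rewrite (derive_cst b).
Qed.

Lemma dtE a b : differentiable f (a, b) -> dt v a b = 'd f (a, b) (0, 1).
Proof.
move=> df.
have [_ H] := @L1 (fun=> a) (fun y => y) b (differentiable_cst _ _) (did _) df.
rewrite /dt derive1E H derive_id.
by rewrite (derive_cst a).
Qed.

Lemma chain (g1 g2 : R -> R) (s d1 d2 : R) :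
  is_derive s 1 g1 d1 -> is_derive s 1 g2 d2 ->
  differentiable f (g1 s, g2 s) ->
  is_derive s 1 (fun s => v (g1 s) (g2 s))
    (d1 * dx v (g1 s) (g2 s) + d2 * dt v (g1 s) (g2 s)).
Proof.
move=> h1 h2 df.
have d1' : differentiable g1 s by apply/derivable1_diffP.
have d2' : differentiable g2 s by apply/derivable1_diffP.
have [dd H] := L1 d1' d2' df.
apply: DeriveDef; first exact/derivable1_diffP.
rewrite H !derive_val dxE // dtE //.
have -> : (d1, d2) = d1 *: ((1, 0) : R * R) + d2 *: (0, 1).
  apply/eqP; rewrite xpair_eqE /= !scaler0 addr0 add0r; apply/andP; split; apply/eqP; exact: (esym (mulr1 _)).
by rewrite linearD !linearZ.
Qed.
Lemma hg1 (x1 c4 s : R) : is_derive s 1 (fun s : R => x1 - c4 * s) (- c4).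
Proof.
apply: is_derive_eq.
by rewrite add0r mul1r; congr (- _); exact: mulr1.
Qed.
Lemma hg2 (t s : R) : is_derive s 1 (fun s : R => t + s) 1.
Proof. by apply: is_derive_eq; rewrite add0r mul1r. Qed.
Lemma hexp (k s : R) : is_derive s 1 (fun s : R => expR (k * s)) (expR (k * s) * k).
Proof.
apply: is_derive_eq.
by congr (_ * _); exact: mulr1.
Qed.
Lemma charact (D c4 k x1 x2 t : R) : 0 < c4 ->
  (forall x t : R, 0 <= x <= D -> differentiable f (x, t)) ->
  (forall x t : R, 0 <= x <= D -> dt v x t - c4 * dx v x t = - k * v x t) ->
  0 <= x2 -> x2 <= x1 -> x1 <= D ->
  v x2 (t + (x1 - x2) / c4) = expR (- (k * ((x1 - x2) / c4))) * v x1 t.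
Proof.
move=> c0 Hd Hpde x20 x21 x1D.
set S := (x1 - x2) / c4.
have S0 : 0 <= S by rewrite /S divr_ge0 ?subr_ge0 // ltW.
have cS : c4 * S = x1 - x2 by rewrite /S mulrC divfK // gt_eqF.
pose phi := fun s => expR (k * s) * v (x1 - c4 * s) (t + s).
have inr s : 0 <= s <= S -> 0 <= x1 - c4 * s <= D.
  move=> /andP[s0 sS]; apply/andP; split.
    rewrite subr_ge0 (le_trans (ler_wpM2l (ltW c0) sS)) // cS.
    by rewrite lerBlDr lerDl.
  rewrite (le_trans _ x1D) // lerBlDr lerDl mulr_ge0 // ltW //.
have der s : 0 <= s <= S -> is_derive s 1 phi 0.
  move=> hs.
  have := is_deriveM (hexp k s) (chain (hg1 x1 c4 s) (hg2 t s) (Hd _ _ (inr s hs))).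
  move=> H; apply: is_derive_eq H _.
  have P := Hpde _ (t + s) (inr s hs).
  rewrite /GRing.scale /=.
  rewrite mul1r mulNr (addrC (- _)) P; ring.
have cphi : {within `[0, S], continuous phi}.
  apply: continuous_in_subspaceT => s; rewrite inE /= in_itv /= => hs.
  apply: differentiable_continuous; apply/derivable1_diffP.
  by have [] := der s hs.
have der' : forall s, s \in `]0, S[ -> is_derive s 1 phi ((fun=> 0) s).
  move=> s; rewrite in_itv /= => /andP[s0 sS]; apply: der.
  by rewrite !ltW.
have [c _ Hc] := MVT_segment S0 der' cphi.
move: Hc; rewrite mul0r => /eqP; rewrite subr_eq0 => /eqP.
rewrite /phi !mulr0 subr0 addr0 expR0 mul1r.
have -> : x1 - c4 * S = x2 by rewrite cS; ring.
move=> <-.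
by rewrite expRN mulrA mulVf ?mul1r // gt_eqF // expR_gt0.
Qed.
End C.

Unset Implicit Arguments.

Theorem theorem2 (R : realType) (D c4 k : R) (v : R -> R -> R) (p : \bar R)
  (x1 x2 : R) :
  0 < D -> 0 < c4 -> 0 < k ->
  (1 <= p)%E ->
  (* classical solution: v differentiable (jointly in (x,t)) on [0,D] x R *)
  (forall x t : R, 0 <= x <= D ->
     differentiable (fun z : R * R => v z.1 z.2) (x, t)) ->
  (* transport PDE  v_t - c4 v_x = - k v  on [0,D] *)
  (forall x t : R, 0 <= x <= D -> dt v x t - c4 * dx v x t = - k * v x t) ->
  (* boundary condition  v_t(D,t) = - k v(D,t),  t >= 0 *)
  (forall t : R, 0 <= t -> dt v D t = - k * v D t) ->
  0 <= x2 -> x2 < x1 -> x1 <= D ->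
  (* input-output setting: zero input before time 0 *)
  (forall th : R, th < 0 -> v x1 th = 0) ->
  in_Lp p (v x1) -> in_Lp p (dx v x1) ->
  ((0 < Lpnorm p (v x1))%E -> (Lpnorm p (v x2) < Lpnorm p (v x1))%E) /\
  ((0 < Lpnorm p (dx v x1))%E -> (Lpnorm p (dx v x2) < Lpnorm p (dx v x1))%E).
Proof.
move=> D0 c0 k0 p1 Hd Hpde _ x20 x21 x1D w0 Lw Ldw.
set S := (x1 - x2) / c4.
set a := expR (- (k * S)).
have S0 : 0 < S by rewrite /S divr_gt0 // subr_gt0.
have aa : 0 < a < 1.
  by rewrite /a expR_gt0 /= expR_lt1 oppr_lt0 mulr_gt0.
have x1r : 0 <= x1 <= D by rewrite x1D andbT (le_trans x20) // ltW.
have x2r : 0 <= x2 <= D by rewrite x20 /= (le_trans (ltW x21)).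
have uE : forall t, v x2 t = a * v x1 (t - S).
  move=> t; have := @charact R v D c4 k x1 x2 (t - S) c0 Hd Hpde x20 (ltW x21) x1D.
  by rewrite subrK.
split; first exact: (Lp_shift_lt aa p1 w0 uE Lw).
have dw0 : forall th, th < 0 -> dx v x1 th = 0.
  move=> th th0.
  have dt0 : dt v x1 th = 0.
    rewrite /dt derive1E (@near_eq_derive _ _ _ _ (cst 0)) ?derive_cst //.
    near=> y; rewrite w0 //.
    near: y; exact: lt_nbhsl.
  have := Hpde x1 th x1r; rewrite dt0 w0 // mulr0 sub0r => /eqP.
  by rewrite oppr_eq0 mulf_eq0 gt_eqF // => /eqP.
have duE : forall t, dx v x2 t = a * dx v x1 (t - S).
  move=> t.
  have P2 := Hpde x2 t x2r.
  have P1 := Hpde x1 (t - S) x1r.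
  have h1 : is_derive t 1 (fun=> x1) 0 by exact: is_derive_cst.
  have h2 : is_derive t 1 (fun t => t - S) 1.
    by apply: is_derive_eq; rewrite subr0.
  have Hc := @chain R v (fun=> x1) (fun t => t - S) t 0 1 h1 h2 (Hd x1 (t - S) x1r).
  have HZ : is_derive t 1 (fun t0 => a * v x1 (t0 - S))
     (a * (0 * dx v x1 (t - S) + 1 * dt v x1 (t - S))) := is_deriveZ a Hc.
  have dtE : dt v x2 t = a * dt v x1 (t - S).
    rewrite /dt derive1E.
    have -> : v x2 = (fun t => a * v x1 (t - S)) by apply/funext => y; rewrite uE.
    by case: HZ => _ ->; rewrite mul0r add0r mul1r.
  have E2 : c4 * dx v x2 t = dt v x2 t + k * v x2 t.
    have -> : dt v x2 t = - k * v x2 t + c4 * dx v x2 t by rewrite -P2 subrK.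
    ring.
  have E1 : c4 * dx v x1 (t - S) = dt v x1 (t - S) + k * v x1 (t - S).
    have -> : dt v x1 (t - S) = - k * v x1 (t - S) + c4 * dx v x1 (t - S) by rewrite -P1 subrK.
    ring.
  have : c4 * dx v x2 t = c4 * (a * dx v x1 (t - S)).
    by rewrite E2 dtE uE (mulrCA c4 a) E1; ring.
  by apply: mulfI; rewrite gt_eqF.
exact: (Lp_shift_lt aa p1 dw0 duE Ldw).
Unshelve. all: by end_near.
Qed.
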